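(* Consider a Markov decision process with continuous state space $\mathcal{S}$, continuous action space $\mathcal{A}$, transition density $p(\mathbf{s}'|\mathbf{s},\mathbf{a})$ and discount factor $\gamma\in(0,1)$, and let $r_1,r_2$ be bounded reward functions with optimal soft Q-functions (temperature $1$) $Q_1^*, Q_2^*$ and optimal soft policies $\pi_i^*(\mathbf{a}|\mathbf{s})\propto\exp(Q_i^*(\mathbf{s},\mathbf{a}))$. Let $Q_\Sigma=\frac12(Q_1^*+Q_2^* )$, $r_\mathcal{C}=\frac12(r_1+r_2)$, let $Q_\mathcal{C}^*$ be the optimal soft Q-function for $r_\mathcal{C}$, and let $\pi_\Sigma(\mathbf{a}|\mathbf{s}) \propto \exp(Q_\Sigma(\mathbf{s},\mathbf{a}))$ be the composed policy. Let $C^*$ be the fixed point of $$C(\mathbf{s},\mathbf{a}) \leftarrow \gamma\, \mathbb{E}_{\mathbf{s}'\sim p(\mathbf{s}'|\mathbf{s},\mathbf{a})}\Big[ D_{1/2}\big(\pi_1^*(\cdot|\mathbf{s}')\,\|\,\pi_2^*(\cdot|\mathbf{s}')\big) + \max_{\mathbf{a}'\in\mathcal{A}} C(\mathbf{s}',\mathbf{a}')\Big],$$ and let $D^*$ be the fixed point of $$D(\mathbf{s},\mathbf{a}) \leftarrow \gamma\,\mathbb{E}_{\mathbf{s}'\sim p(\mathbf{s}'|\mathbf{s},\mathbf{a})}\Big[\mathbb{E}_{\mathbf{a}'\sim\pi_\Sigma(\mathbf{a}'|\mathbf{s}')}\big[C^*(\mathbf{s}',\mathbf{a}') + D(\mathbf{s}',\mathbf{a}')\big]\Big].$$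 Then the soft Q-function $Q_\mathcal{C}^{\pi_\Sigma}$ of the policy $\pi_\Sigma$ for the reward $r_\mathcal{C}$ satisfies, for all $\mathbf{s}\in\mathcal{S}$, $\mathbf{a}\in\mathcal{A}$, $$Q_\mathcal{C}^{\pi_\Sigma}(\mathbf{s},\mathbf{a}) \ge Q_\mathcal{C}^*(\mathbf{s},\mathbf{a}) - D^*(\mathbf{s},\mathbf{a}).$$
   Context: Soft (maximum-entropy) reinforcement learning with temperature $1$: for a bounded reward $r$, the soft Bellman backup maps a bounded $Q$ to $r(\mathbf{s},\mathbf{a}) + \gamma\,\mathbb{E}_{\mathbf{s}'\sim p(\cdot|\mathbf{s},\mathbf{a})}[\log\int_{\mathcal{A}}\exp(Q(\mathbf{s}',\mathbf{a}'))\,d\mathbf{a}']$; the optimal soft Q-function for $r$ is its unique fixed point, and the optimal soft policy is proportional to $\exp$ of it. For a policy $\pi$, its soft Q-function $Q^\pi$ for reward $r$ is the fixed point of the soft policy evaluation operator $Q(\mathbf{s},\mathbf{a}) \leftarrow r(\mathbf{s},\mathbf{a}) + \gamma\,\mathbb{E}_{\mathbf{s}'\sim p(\cdot|\mathbf{s},\mathbf{a})}\big[\mathbb{E}_{\mathbf{a}'\sim\pi(\cdot|\mathbf{s}')}[Q(\mathbf{s}',\mathbf{a}') - \log\pi(\mathbf{a}'|\mathbf{s}')]\big]$. $D_{1/2}(p\|q) = -2\log\int\sqrt{p q}$ is the Rényi divergence of order $1/2$. *)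

(* Defs.v *)
From HB Require Import structures.
From mathcomp Require Import all_boot all_order all_algebra.
From mathcomp Require Import all_classical all_reals all_analysis.
Set Implicit Arguments. Unset Strict Implicit. Unset Printing Implicit Defensive.
Import Order.TTheory GRing.Theory Num.Theory.
Local Open Scope classical_set_scope.
Local Open Scope ring_scope.

Section SoftMDP.
Context {d1 d2 : measure_display} {R : realType}
  {S : measurableType d1} {A : measurableType d2}.
Variables (muS : {measure set S -> \bar R}) (muA : {measure set A -> \bar R}).

Definition is_transition_density (p : S -> A -> S -> R) : Prop :=
  [/\ measurable_fun setT (fun x : (S * A) * S => p x.1.1 x.1.2 x.2),
      (forall s a s', 0 <= p s a s') &
      (forall s a, (\int[muS]_s' (p s a s')%:E = 1)%E)].

Definition Enext (p : S -> A -> S -> R) (s : S) (a : A) (f : S -> R) : R :=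
  Rintegral muS setT (fun s' => p s a s' * f s').

Definition Eact (pi : S -> A -> R) (s : S) (f : A -> R) : R :=
  Rintegral muA setT (fun a => pi s a * f a).

Definition soft_value (Q : S -> A -> R) (s : S) : R :=
  ln (Rintegral muA setT (fun a => expR (Q s a))).

Definition soft_policy (Q : S -> A -> R) (s : S) (a : A) : R :=
  expR (Q s a) / Rintegral muA setT (fun a' => expR (Q s a')).

Definition soft_bellman (gamma : R) (p : S -> A -> S -> R) (r Q : S -> A -> R)
  (s : S) (a : A) : R :=
  r s a + gamma * Enext p s a (soft_value Q).

Definition soft_eval (gamma : R) (p : S -> A -> S -> R) (r pi Q : S -> A -> R)
  (s : S) (a : A) : R :=
  r s a + gamma * Enext p s a
    (fun s' => Eact pi s' (fun a' => Q s' a' - ln (pi s' a'))).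

Definition renyi_half (f g : A -> R) : R :=
  - 2 * ln (Rintegral muA setT (fun a => Num.sqrt (f a * g a))).

Definition C_backup (gamma : R) (p : S -> A -> S -> R) (pi1 pi2 C : S -> A -> R)
  (s : S) (a : A) : R :=
  gamma * Enext p s a
    (fun s' => renyi_half (pi1 s') (pi2 s') + sup (range (C s'))).

Definition D_backup (gamma : R) (p : S -> A -> S -> R) (pi Cs D : S -> A -> R)
  (s : S) (a : A) : R :=
  gamma * Enext p s a (fun s' => Eact pi s' (fun a' => Cs s' a' + D s' a')).

End SoftMDP.

Definition bounded2 {R : realType} {S A : Type} (f : S -> A -> R) : Prop :=
  exists M : R, forall s a, `|f s a| <= M.

Definition measurable2 {d1 d2 : measure_display} {R : realType}
  {S : measurableType d1} {A : measurableType d2} (f : S -> A -> R) : Prop :=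
  measurable_fun setT (fun x : S * A => f x.1 x.2).

(* Main.v *)
Require Import Defs.
From HB Require Import structures.
From mathcomp Require Import all_boot all_order all_algebra.
From mathcomp Require Import all_classical all_reals all_analysis.
From mathcomp Require Import measurable_realfun ring lra.
Import Order.TTheory GRing.Theory Num.Theory.
Local Open Scope classical_set_scope.
Local Open Scope ring_scope.

Section Good.
Context {R : realType}.

Definition good {d} {T : measurableType d} (f : T -> R) :=
  measurable_fun setT f /\ exists M : R, forall x, `|f x| <= M.

Lemma good_cst d (T : measurableType d) (c : R) : good (fun _ : T => c).
Proof. by split; [exact: measurable_cst | exists `|c|]. Qed.

Lemma goodD d (T : measurableType d) (f g : T -> R) :
  good f -> good g -> good (fun x => f x + g x).
Proof.
move=> [mf [M hM]] [mg [N hN]]; split; first exact: measurable_funD.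
exists (M + N) => x; apply: le_trans (ler_normD _ _) _; exact: lerD.
Qed.

Lemma goodN d (T : measurableType d) (f : T -> R) :
  good f -> good (fun x => - f x).
Proof.
move=> [mf [M hM]]; split; first exact: measurable_funN.
by exists M => x; rewrite normrN.
Qed.

Lemma goodB d (T : measurableType d) (f g : T -> R) :
  good f -> good g -> good (fun x => f x - g x).
Proof. by move=> hf hg; apply: goodD => //; exact: goodN. Qed.

Lemma goodM d (T : measurableType d) (f g : T -> R) :
  good f -> good g -> good (fun x => f x * g x).
Proof.
move=> [mf [M hM]] [mg [N hN]]; split; first exact: measurable_funM.
exists (M * N) => x; rewrite normrM; apply: ler_pM => //.
Qed.

Lemma good_expR d (T : measurableType d) (f : T -> R) :
  good f -> good (fun x => expR (f x)).
Proof.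
move=> [mf [M hM]]; split; first exact: measurableT_comp (@measurable_expR R) mf.
exists (expR M) => x; rewrite ger0_norm ?expR_ge0 // ler_expR.
exact: le_trans (ler_norm _) (hM x).
Qed.

Lemma good_comp d d' (T : measurableType d) (U : measurableType d') (f : U -> R) (g : T -> U) :
  good f -> measurable_fun setT g -> good (fun x => f (g x)).
Proof.
move=> [mf [M hM]] mg; split; first exact: measurableT_comp mf mg.
by exists M.
Qed.

Lemma good_bounded_near d (T : measurableType d) (f : T -> R) :
  good f -> [bounded f x | x in setT].
Proof.
move=> [_ [M hM]]; rewrite /bounded_near; near=> M'.
move=> x _; apply: le_trans (hM x) _; near: M'.
apply: nbhs_pinfty_ge; exact: num_real.
Unshelve. all: by end_near.
Qed.

Lemma good_integrable d (T : measurableType d) (mu : {measure set T -> \bar R}) (f : T -> R) :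
  (mu setT < +oo)%E -> good f -> mu.-integrable setT (EFin \o f).
Proof.
move=> muf hf; apply: measurable_bounded_integrable => //.
  by case: hf.
exact: good_bounded_near.
Qed.

End Good.

Section MuA.
Context {d1 d2 : measure_display} {R : realType}
  {S : measurableType d1} {A : measurableType d2}.
Context (muA : {finite_measure set A -> \bar R}).

Definition good2 (f : S -> A -> R) := good (fun x : S * A => f x.1 x.2).

Lemma good2_of f : measurable2 f -> bounded2 f -> good2 f.
Proof. by move=> mf [M hM]; split => //; exists M => -[s a]. Qed.

Lemma good2_sec f s : good2 f -> good (f s).
Proof.
move=> [mf [M hM]]; split.
  exact: (measurable_fun_pair2 s mf).
by exists M => a; exact: (hM (s, a)).
Qed.

Lemma good2_fst (f : S -> R) : good f -> good2 (fun s _ => f s).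
Proof. by move=> hf; apply: (@good_comp _ _ _ _ _ f fst hf); exact: measurable_fst. Qed.

Lemma muA_fin : (muA setT < +oo)%E.
Proof. by rewrite -ge0_fin_numE //; exact: fin_num_measure. Qed.

Definition mA := fine (muA setT).

Lemma intA (f : A -> R) : good f -> muA.-integrable setT (EFin \o f).
Proof. by move=> hf; apply: good_integrable => //; exact: muA_fin. Qed.

Lemma RintA_le (f g : A -> R) : good f -> good g -> (forall a, f a <= g a) ->
  Rintegral muA setT f <= Rintegral muA setT g.
Proof. by move=> hf hg fg; apply: le_Rintegral => //; exact: intA. Qed.

Lemma RintA_D (f g : A -> R) : good f -> good g ->
  Rintegral muA setT (fun a => f a + g a) =
  Rintegral muA setT f + Rintegral muA setT g.
Proof. by move=> hf hg; apply: RintegralD => //; exact: intA. Qed.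

Lemma RintA_Z (k : R) (f : A -> R) : good f ->
  Rintegral muA setT (fun a => k * f a) = k * Rintegral muA setT f.
Proof. by move=> hf; apply: RintegralZl => //; exact: intA. Qed.

Lemma RintA_cst (c : R) : Rintegral muA setT (fun _ => c) = c * mA.
Proof. exact: Rintegral_cst. Qed.

Lemma good_Rint (f : S -> A -> R) : good2 f ->
  good (fun s => Rintegral muA setT (f s)).
Proof.
move=> hf; have [mf [M hM]] := hf.
have M0 : 0 <= M by apply: le_trans (hM (point, point)) ; rewrite normr_ge0.
split.
  pose g := EFin \o (fun x : S * A => f x.1 x.2 + M).
  have mg : measurable_fun setT g.
    apply/measurable_EFinP; apply: measurable_funD; [exact: mf | exact: measurable_cst].
  have g0 : forall x, (0 <= g x)%E.
    move=> x; rewrite lee_fin; have := hM x; rewrite ler_norml => /andP[h _].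
    by rewrite -lerBlDr sub0r.
  have mF := @measurable_fun_fubini_tonelli_F _ _ S A R muA g mg g0.
  have -> : (fun s => Rintegral muA setT (f s)) =
      (fun s => fine (fubini_F muA g s) - M * mA).
    apply/funext => s.
    have : Rintegral muA setT (fun a => f s a + M) =
       Rintegral muA setT (f s) + M * mA.
      by rewrite RintA_D ?RintA_cst //; [exact: good2_sec | exact: good_cst].
    rewrite /Rintegral /fubini_F /g /= => ->; lra.
  apply: measurable_funB; last exact: measurable_cst.
  exact: measurableT_comp (fine_measurable _) mF.
exists (M * mA) => s.
have H := le_normr_Rintegral measurableT (intA _ (good2_sec _ s hf)).
apply: le_trans H _.
rewrite -RintA_cst; apply: RintA_le.
- have [ms _] := good2_sec _ s hf; split; first exact: measurableT_comp ms.
  by exists M => a; rewrite normr_id; exact: (hM (s, a)).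
- exact: good_cst.
- by move=> a; exact: (hM (s, a)).
Qed.

End MuA.

Section Soft.
Context {d1 d2 : measure_display} {R : realType}
  {S : measurableType d1} {A : measurableType d2}.
Context (muA : {finite_measure set A -> \bar R}) (hA : (0 < muA setT)%E).

Local Notation Rint := (Rintegral muA setT).
Local Notation V := (soft_value muA).

Lemma mA_gt0 : 0 < mA muA.
Proof. by apply: fine_gt0; rewrite hA muA_fin. Qed.

Lemma good2_exp (Q : S -> A -> R) : good2 Q -> good2 (fun s a => expR (Q s a)).
Proof. by move=> hQ; exact: good_expR. Qed.

Lemma Z_bounds (Q : S -> A -> R) M s : good2 Q -> (forall s a, `|Q s a| <= M) ->
  expR (- M) * mA muA <= Rint (fun a => expR (Q s a)) <= expR M * mA muA.
Proof.
move=> hQ hM; have hE := good2_sec _ s (good2_exp _ hQ).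
apply/andP; split; rewrite -RintA_cst; apply: RintA_le => //; try exact: good_cst.
all: by move=> a; rewrite ler_expR; have := hM s a; rewrite ler_norml => /andP[? ?]; lra.
Qed.

Lemma Z_pos (Q : S -> A -> R) s : good2 Q -> 0 < Rint (fun a => expR (Q s a)).
Proof.
move=> hQ; have [_ [M hM]] := hQ.
have /andP[h _] := Z_bounds _ _ s hQ (fun s a => hM (s, a)).
by apply: lt_le_trans h; rewrite mulr_gt0 ?expR_gt0 ?mA_gt0.
Qed.

Lemma V_good (Q : S -> A -> R) : good2 Q -> good (V Q).
Proof.
move=> hQ; have [mZ _] := good_Rint muA _ (good2_exp _ hQ).
split; first exact: measurableT_comp (@measurable_ln R) mZ.
have [_ [M hM]] := hQ.
exists (`|ln (expR (- M) * mA muA)| + `|ln (expR M * mA muA)|) => s.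
have /andP[h1 h2] := Z_bounds _ _ s hQ (fun s a => hM (s, a)).
have hZ := Z_pos _ s hQ.
have hm := mA_gt0.
have l1 : ln (expR (- M) * mA muA) <= V Q s.
  by rewrite /soft_value ler_ln ?posrE ?mulr_gt0 ?expR_gt0.
have l2 : V Q s <= ln (expR M * mA muA).
  by rewrite /soft_value ler_ln ?posrE ?mulr_gt0 ?expR_gt0.
have n1 := ler_norm (ln (expR (- M) * mA muA)).
have n2 := ler_norm (ln (expR M * mA muA)).
have n3 := ler_norm (- ln (expR (- M) * mA muA)).
have n4 := ler_norm (- ln (expR M * mA muA)).
rewrite !normrN in n3 n4.
rewrite ler_norml; apply/andP; split; lra.
Qed.

Lemma V_mono (Q Q' : S -> A -> R) s c : good2 Q -> good2 Q' ->
  (forall a, Q s a <= Q' s a + c) -> V Q s <= V Q' s + c.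
Proof.
move=> hQ hQ' hle.
have hZ := Z_pos _ s hQ; have hZ' := Z_pos _ s hQ'.
have e : Rint (fun a => expR (Q' s a + c)) = expR c * Rint (fun a => expR (Q' s a)).
  rewrite -RintA_Z; last exact: good2_sec _ s (good2_exp _ hQ').
  by apply: eq_Rintegral => a _; rewrite expRD mulrC.
have : Rint (fun a => expR (Q s a)) <= expR c * Rint (fun a => expR (Q' s a)).
  rewrite -e; apply: RintA_le.
  - exact: good2_sec _ s (good2_exp _ hQ).
  - by apply: good_expR; apply: goodD; [exact: good2_sec _ s hQ' | exact: good_cst].
  - by move=> a; rewrite ler_expR.
move=> h.
have h2 : ln (Rint (fun a => expR (Q s a))) <= ln (expR c * Rint (fun a => expR (Q' s a))).
  by rewrite ler_ln ?posrE ?mulr_gt0 ?expR_gt0.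
move: h2; rewrite lnM ?posrE ?expR_gt0 // expRK.
rewrite /soft_value; lra.
Qed.

Lemma pol_exp (Q : S -> A -> R) s a : good2 Q ->
  soft_policy muA Q s a = expR (Q s a - V Q s).
Proof.
move=> hQ; rewrite expRB /soft_value lnK // posrE; exact: Z_pos.
Qed.


Lemma amgm (x y w : R) : 0 <= x -> 0 <= y -> 0 <= w -> w * w = x * y ->
  w <= x / 2 + y / 2.
Proof.
move=> x0 y0 w0 e; have := sqr_ge0 (x - y).
case: (leP w (x / 2 + y / 2)) => // lt hsq; exfalso.
have : (x / 2 + y / 2) * (x / 2 + y / 2) < w * w.
  by apply: ltr_pM => //; lra.
nra.
Qed.

Lemma V_sum (Q1 Q2 : S -> A -> R) s : good2 Q1 -> good2 Q2 ->
  V (fun s a => (Q1 s a + Q2 s a) / 2) s <= (V Q1 s + V Q2 s) / 2.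
Proof.
move=> h1 h2.
set v1 := V Q1 s; set v2 := V Q2 s; set k := (v2 - v1) / 2.
have e1 : Rint (fun a => expR (Q1 s a)) = expR v1.
  by rewrite /v1 /soft_value lnK // posrE; exact: Z_pos.
have e2 : Rint (fun a => expR (Q2 s a)) = expR v2.
  by rewrite /v2 /soft_value lnK // posrE; exact: Z_pos.
have g1 := good2_sec _ s (good2_exp _ h1).
have g2 := good2_sec _ s (good2_exp _ h2).
have hS : good2 (fun s a => (Q1 s a + Q2 s a) / 2).
  by apply: goodM; [exact: goodD | exact: good_cst].
have hle : Rint (fun a => expR ((Q1 s a + Q2 s a) / 2)) <=
    Rint (fun a => (expR k / 2) * expR (Q1 s a) + (expR (- k) / 2) * expR (Q2 s a)).
  apply: RintA_le.
  - exact: good2_sec _ s (good2_exp _ hS).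
  - by apply: goodD; apply: goodM => //; exact: good_cst.
  - move=> a.
    have -> : expR k / 2 * expR (Q1 s a) + expR (- k) / 2 * expR (Q2 s a) =
      expR (k + Q1 s a) / 2 + expR (- k + Q2 s a) / 2.
      by rewrite !expRD; ring.
    apply: amgm; rewrite ?expR_ge0 // -!expRD; congr expR; by rewrite addrACA subrr add0r -splitr.
move: hle; rewrite RintA_D; last 2 first.
  by apply: goodM => //; exact: good_cst.
  by apply: goodM => //; exact: good_cst.
rewrite !RintA_Z // e1 e2.
have -> : expR k / 2 * expR v1 + expR (- k) / 2 * expR v2 = expR ((v1 + v2) / 2).
  have -> : (v1 + v2) / 2 = k + v1 by rewrite /k; field.
  have e3 : - k + v2 = k + v1 by rewrite /k; field.
  have -> : expR k / 2 * expR v1 = expR (k + v1) / 2 by rewrite expRD; ring.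
  have -> : expR (- k) / 2 * expR v2 = expR (- k + v2) / 2 by rewrite expRD; ring.
  by rewrite e3 -splitr.
move=> h.
have h3 : ln (Rint (fun a => expR ((Q1 s a + Q2 s a) / 2))) <= ln (expR ((v1 + v2) / 2)).
  by rewrite ler_ln ?posrE ?expR_gt0 //; exact: (Z_pos _ s hS).
by move: h3; rewrite expRK.
Qed.

Lemma renyi_eq (Q1 Q2 : S -> A -> R) s : good2 Q1 -> good2 Q2 ->
  renyi_half muA (soft_policy muA Q1 s) (soft_policy muA Q2 s) =
  V Q1 s + V Q2 s - 2 * V (fun s a => (Q1 s a + Q2 s a) / 2) s.
Proof.
move=> h1 h2.
have hS : good2 (fun s a => (Q1 s a + Q2 s a) / 2).
  by apply: goodM; [exact: goodD | exact: good_cst].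
set c := - ((V Q1 s + V Q2 s) / 2).
have e : Rint (fun a => Num.sqrt (soft_policy muA Q1 s a * soft_policy muA Q2 s a)) =
    expR c * Rint (fun a => expR ((Q1 s a + Q2 s a) / 2)).
  rewrite -RintA_Z; last exact: good2_sec _ s (good2_exp _ hS).
  apply: eq_Rintegral => a _.
  rewrite !pol_exp // -!expRD.
  set x := (_ + _).
  have -> : x = (c + (Q1 s a + Q2 s a) / 2) * 2 by rewrite /x /c; field.
  rewrite expRM_natr sqrtr_sqr ger0_norm ?expR_ge0 // expRD.
rewrite /renyi_half e lnM ?posrE ?expR_gt0 //; last exact: (Z_pos _ s hS).
rewrite expRK /c /soft_value; by field.
Qed.

End Soft.

Section Next.
Context {d1 d2 : measure_display} {R : realType}
  {S : measurableType d1} {A : measurableType d2}.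
Context (muS : {measure set S -> \bar R}) (p : S -> A -> S -> R)
  (hp : is_transition_density muS p).

Local Notation E := (Enext muS p).

Lemma p_meas s a : measurable_fun setT (p s a).
Proof.
have [mp _ _] := hp.
exact: (measurable_fun_pair2 (s, a) mp).
Qed.

Lemma p_int s a : muS.-integrable setT (EFin \o p s a).
Proof.
have [_ p0 p1] := hp.
apply/integrableP; split; first exact/measurable_EFinP/p_meas.
have -> : (\int[muS]_x `|(EFin \o p s a) x|)%E = (\int[muS]_x (p s a x)%:E)%E.
  by apply: eq_integral => x _ /=; rewrite ger0_norm.

by rewrite p1 ltry.
Qed.

Lemma pf_int s a (f : S -> R) : good f ->
  muS.-integrable setT (EFin \o (fun x => p s a x * f x)).
Proof.
move=> hf; have [mf _] := hf.
have := integrableMl measurableT (p_int s a) mf (good_bounded_near _ _ _ hf).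
by apply: eq_integrable => // x _ /=; rewrite EFinM.
Qed.

Lemma Enext_le s a (f g : S -> R) : good f -> good g ->
  (forall x, f x <= g x) -> E s a f <= E s a g.
Proof.
have [_ p0 _] := hp.
move=> hf hg fg; apply: le_Rintegral => //; try exact: pf_int.
by move=> x _; apply: ler_wpM2l.
Qed.

Lemma Enext_cst s a c : E s a (fun _ => c) = c.
Proof.
have [_ p0 p1] := hp.
rewrite /Enext RintegralZr //; last exact: p_int.
by rewrite /Rintegral p1 mul1r.
Qed.

Lemma EnextD s a (f g : S -> R) : good f -> good g ->
  E s a (fun x => f x + g x) = E s a f + E s a g.
Proof.
move=> hf hg; rewrite /Enext -RintegralD //; try exact: pf_int.
by apply: eq_Rintegral => x _; rewrite mulrDr.
Qed.

Lemma EnextZ s a k (f : S -> R) : good f ->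
  E s a (fun x => k * f x) = k * E s a f.
Proof.
move=> hf; rewrite /Enext -RintegralZl //; last exact: pf_int.
by apply: eq_Rintegral => x _; rewrite mulrCA.
Qed.

Lemma EnextB s a (f g : S -> R) : good f -> good g ->
  E s a (fun x => f x - g x) = E s a f - E s a g.
Proof.
move=> hf hg; rewrite EnextD //; last exact: goodN.
have -> : (fun x => - g x) = (fun x => (-1) * g x) by apply/funext => x; rewrite mulN1r.
by rewrite EnextZ // mulN1r.
Qed.

Lemma Enext_shift s a (f g : S -> R) c : good f -> good g ->
  (forall x, f x <= g x + c) -> E s a f <= E s a g + c.
Proof.
move=> hf hg fg; rewrite -[X in _ + X](Enext_cst s a) -EnextD //; last exact: good_cst.
by apply: Enext_le => //; apply: goodD => //; exact: good_cst.
Qed.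

End Next.

Section Misc.
Context {R : realType}.

Lemma contraction {S A : Type} (u : S -> A -> R) g : 0 < g < 1 -> bounded2 u ->
  (forall c, (forall s a, u s a <= c) -> forall s a, u s a <= g * c) ->
  forall s a, u s a <= 0.
Proof.
move=> /andP[g0 g1] [M hM] H s0 a0.
pose E := [set x | exists s a, x = u s a].
have ub : has_ubound E.
  by exists M => x [s [a ->]]; apply: le_trans (ler_norm _) (hM s a).
have ne : E !=set0 by exists (u s0 a0), s0, a0.
have le_sup : forall s a, u s a <= sup E.
  by move=> s a; apply: ub_le_sup => //; exists s, a.
have h := H (sup E) le_sup.
have : sup E <= g * sup E by apply: ge_sup => // x [s [a ->]]; exact: h.
have := le_sup s0 a0; nra.
Qed.

Lemma sup_range_ub {A : Type} (u : A -> R) M : (forall a, `|u a| <= M) ->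
  forall a, u a <= sup (range u).
Proof.
move=> hM a; apply: ub_le_sup; last by exists a.
by exists M => x [b _ <-]; apply: le_trans (ler_norm _) (hM b).
Qed.

Lemma sup_range_bnd {A : Type} (u : A -> R) M (a0 : A) : (forall a, `|u a| <= M) ->
  `|sup (range u)| <= M.
Proof.
move=> hM; rewrite ler_norml; apply/andP; split.
  apply: le_trans _ (sup_range_ub _ _ hM a0).
  by have := hM a0; rewrite ler_norml => /andP[].
apply: ge_sup; first by exists (u a0), a0.
by move=> x [b _ <-]; apply: le_trans (ler_norm _) (hM b).
Qed.

End Misc.

Section Pi.
Context {d1 d2 : measure_display} {R : realType}
  {S : measurableType d1} {A : measurableType d2}.
Context (muA : {finite_measure set A -> \bar R}) (hA : (0 < muA setT)%E).

Local Notation Rint := (Rintegral muA setT).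
Local Notation V := (soft_value muA).

Lemma pi_good (Q : S -> A -> R) : good2 Q ->
  good2 (fun s a => expR (Q s a - V Q s)).
Proof.
move=> hQ; apply: good_expR; apply: goodB => //.
exact: (good2_fst _ (V_good muA hA _ hQ)).
Qed.

Lemma Rint_pi (Q : S -> A -> R) s : good2 Q ->
  Rint (fun a => expR (Q s a - V Q s)) = 1.
Proof.
move=> hQ.
have -> : (fun a => expR (Q s a - V Q s)) = (fun a => expR (- V Q s) * expR (Q s a)).
  by apply/funext => a; rewrite mulrC -expRD.
rewrite RintA_Z; last exact: good2_sec _ s (good2_exp _ hQ).
have hZ := Z_pos muA hA _ s hQ.
by rewrite /soft_value expRN lnK ?posrE // mulVf // gt_eqF.
Qed.

Lemma Rint_pi_ge (Q : S -> A -> R) s (f : A -> R) c : good2 Q -> good f ->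
  (forall a, c <= f a) -> c <= Rint (fun a => expR (Q s a - V Q s) * f a).
Proof.
move=> hQ hf hc.
have hp := good2_sec _ s (pi_good _ hQ).
have : Rint (fun a => expR (Q s a - V Q s) * c) <= Rint (fun a => expR (Q s a - V Q s) * f a).
  apply: RintA_le; try (by apply: goodM => //; exact: good_cst).
  by move=> a; apply: ler_wpM2l; rewrite ?expR_ge0.
have -> : (fun a => expR (Q s a - V Q s) * c) = (fun a => c * expR (Q s a - V Q s)).
  by apply/funext => a; rewrite mulrC.
by rewrite RintA_Z // Rint_pi // mulr1.
Qed.

End Pi.


Arguments good_cst {R d T}.
Arguments goodD {R d T f g}.
Arguments goodN {R d T f}.
Arguments goodB {R d T f g}.
Arguments goodM {R d T f g}.
Arguments good_expR {R d T f}.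
Arguments good2_of {d1 d2 R S A f}.
Arguments good2_sec {d1 d2 R S A f}.
Arguments good2_fst {d1 d2 R S A f}.
Arguments good_Rint {d1 d2 R S A} muA {f}.
Arguments V_good {d1 d2 R S A muA} hA {Q}.
Arguments V_mono {d1 d2 R S A muA} hA {Q Q'} s c.
Arguments V_sum {d1 d2 R S A muA} hA {Q1 Q2} s.
Arguments renyi_eq {d1 d2 R S A muA} hA {Q1 Q2} s.
Arguments pol_exp {d1 d2 R S A muA} hA {Q} s a.
Arguments pi_good {d1 d2 R S A muA} hA {Q}.
Arguments Rint_pi {d1 d2 R S A muA} hA {Q} s.
Arguments Rint_pi_ge {d1 d2 R S A muA} hA {Q} s {f} c.
Arguments Enext_shift {d1 d2 R S A muS p} hp s a {f g} c.
Arguments EnextD {d1 d2 R S A muS p} hp s a {f g}.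
Arguments EnextB {d1 d2 R S A muS p} hp s a {f g}.
Arguments EnextZ {d1 d2 R S A muS p} hp s a k {f}.
Arguments contraction {R S A} u g.
Lemma arB {R : realType} (r1 r2 g eC e1 e2 c : R) : 0 <= g ->
  eC <= 2^-1 * (e1 + e2) + c ->
  (r1 + r2) / 2 + g * eC - (r1 + g * e1 + (r2 + g * e2)) / 2 <= g * c.
Proof. move=> g0 h; have := ler_wpM2l g0 h; lra. Qed.

Lemma arC {R : realType} (r1 r2 g eC e1 e2 eR c : R) : 0 <= g ->
  2^-1 * (e1 + e2) <= eC + eR + c ->
  (r1 + g * e1 + (r2 + g * e2)) / 2 - ((r1 + r2) / 2 + g * eC) - g * eR <= g * c.
Proof. move=> g0 h; have := ler_wpM2l g0 h; lra. Qed.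

Lemma arC1 {R : realType} (v1 v2 vS vC sp c : R) :
  vS <= vC + (sp + c) -> vS <= (v1 + v2) / 2 ->
  2^-1 * (v1 + v2) <= vC + (v1 + v2 - 2 * vS + sp) + c.
Proof. move=> *; lra. Qed.

Lemma arD {R : realType} (rr g eC eF eG c : R) : 0 <= g ->
  eC <= eF + eG + c ->
  rr + g * eC - (rr + g * eF) - g * eG <= g * c.
Proof. move=> g0 h; have := ler_wpM2l g0 h; lra. Qed.

Lemma arD1 {R : realType} (qp qs vs cs ds qc c : R) :
  qc - qp - ds <= c -> qs - qc - cs <= 0 ->
  vs - c <= qp - (qs - vs) + (cs + ds).
Proof. move=> *; lra. Qed.

Lemma arC2 {R : realType} (qs qc cs sp c : R) :
  cs <= sp -> qs - qc - cs <= c -> qs <= qc + (sp + c).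
Proof. move=> *; lra. Qed.

Lemma arFin {R : realType} (x y z : R) : x - z - y <= 0 -> x - y <= z.
Proof. move=> *; lra. Qed.

Lemma good2_bnd {d1 d2 : measure_display} {R : realType}
  {S : measurableType d1} {A : measurableType d2} (f : S -> A -> R) :
  good2 f -> bounded2 f.
Proof. by move=> [_ [M hM]]; exists M => s a; exact: (hM (s, a)). Qed.

Theorem theorem1 (d1 d2 : measure_display) (R : realType)
  (S : measurableType d1) (A : measurableType d2)
  (muS : {measure set S -> \bar R}) (muA : {finite_measure set A -> \bar R})
  (gamma : R) (p : S -> A -> S -> R) (r1 r2 : S -> A -> R)
  (Q1 Q2 QC Cs Ds QpiS : S -> A -> R) :
  (0 < muA setT)%E ->
  0 < gamma < 1 ->
  is_transition_density muS p ->
  measurable2 r1 -> bounded2 r1 ->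
  measurable2 r2 -> bounded2 r2 ->
  (* Q1, Q2 : optimal soft Q-functions for r1, r2 *)
  measurable2 Q1 -> bounded2 Q1 ->
  (forall s a, Q1 s a = soft_bellman muS muA gamma p r1 Q1 s a) ->
  measurable2 Q2 -> bounded2 Q2 ->
  (forall s a, Q2 s a = soft_bellman muS muA gamma p r2 Q2 s a) ->
  let QSig := fun s a => (Q1 s a + Q2 s a) / 2 in
  let rC := fun s a => (r1 s a + r2 s a) / 2 in
  let pi1 := soft_policy muA Q1 in
  let pi2 := soft_policy muA Q2 in
  let piSig := soft_policy muA QSig in
  (* QC : optimal soft Q-function for rC *)
  measurable2 QC -> bounded2 QC ->
  (forall s a, QC s a = soft_bellman muS muA gamma p rC QC s a) ->
  (* Cs : fixed point of the C-operator *)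
  measurable2 Cs -> bounded2 Cs ->
  measurable_fun setT (fun s' => sup (range (Cs s'))) ->
  (forall s a, Cs s a = C_backup muS muA gamma p pi1 pi2 Cs s a) ->
  (* Ds : fixed point of the D-operator *)
  measurable2 Ds -> bounded2 Ds ->
  (forall s a, Ds s a = D_backup muS muA gamma p piSig Cs Ds s a) ->
  (* QpiS : soft Q-function of piSig for rC *)
  measurable2 QpiS -> bounded2 QpiS ->
  (forall s a, QpiS s a = soft_eval muS muA gamma p rC piSig QpiS s a) ->
  forall s a, QC s a - Ds s a <= QpiS s a.
Proof.
move=> hA g01 hp mr1 br1 mr2 br2 mQ1 bQ1 eQ1 mQ2 bQ2 eQ2 QSig rC pi1 pi2 piSig
  mQC bQC eQC mCs bCs msup eCs mDs bDs eDs mQp bQp eQp s0 a0.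
have /andP[g0 g1] := g01.
have h1 := good2_of mQ1 bQ1.
have h2 := good2_of mQ2 bQ2.
have hC := good2_of mQC bQC.
have hCs := good2_of mCs bCs.
have hDs := good2_of mDs bDs.
have hQp := good2_of mQp bQp.
have hS : good2 QSig := goodM (goodD h1 h2) (good_cst _).
have gV1 := V_good hA h1.
have gV2 := V_good hA h2.
have gVC := V_good hA hC.
have gVS := V_good hA hS.
have hB : forall s a, QC s a - QSig s a <= 0.
  apply: (contraction (fun s a => QC s a - QSig s a) _ g01).
    have [M1 hM1] := bQC; have [_ [M2 hM2]] := hS.
    by exists (M1 + M2) => s a; apply: le_trans (ler_normB _ _) _; apply: lerD => //; exact: (hM2 (s, a)).
  move=> c hc s a.
  rewrite /QSig /rC eQC eQ1 eQ2 /soft_bellman /rC.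
  have hpt : forall x, soft_value muA QC x <= 2^-1 * (soft_value muA Q1 x + soft_value muA Q2 x) + c.
    move=> x; apply: le_trans (V_mono hA x c hC hS (fun a => _)) _.
      by move=> b; rewrite -lerBlDl; exact: hc.
    rewrite lerD2r mulrC; exact (V_sum hA x h1 h2).
  have hE := Enext_shift hp s a c gVC (goodM (good_cst 2^-1) (goodD gV1 gV2)) hpt.
  move: hE; rewrite (EnextZ hp s a) ?(EnextD hp s a) //; last exact: goodD.
  exact: arB (ltW g0).
pose supC := fun x => sup (range (Cs x)).
have [MC hMC] := bCs.
have gsup : good supC.
  by split => //; exists MC => x; exact: (sup_range_bnd (Cs x) MC a0 (hMC x)).
have gR : good (fun x => soft_value muA Q1 x + soft_value muA Q2 x
    - 2 * soft_value muA QSig x + supC x).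
  exact: goodD (goodB (goodD gV1 gV2) (goodM (good_cst 2) gVS)) gsup.
have eCs' : forall s a, Cs s a = gamma * Enext muS p s a
    (fun x => soft_value muA Q1 x + soft_value muA Q2 x - 2 * soft_value muA QSig x + supC x).
  move=> s a; rewrite eCs /C_backup; congr (_ * _); congr (Enext _ _ _ _).
  by apply/funext => x; rewrite /pi1 /pi2 (renyi_eq hA x h1 h2).
have hCC : forall s a, QSig s a - QC s a - Cs s a <= 0.
  apply: (contraction (fun s a => QSig s a - QC s a - Cs s a) _ g01).
    exact: good2_bnd _ (goodB (goodB hS hC) hCs).
  move=> c hc s a.
  have hpt : forall x, 2^-1 * (soft_value muA Q1 x + soft_value muA Q2 x) <=
      soft_value muA QC x + (soft_value muA Q1 x + soft_value muA Q2 x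
      - 2 * soft_value muA QSig x + supC x) + c.
    move=> x; apply: arC1; last exact (V_sum hA x h1 h2).
    apply: (V_mono hA x (supC x + c) hS hC) => b.
    have := hc x b; have := sup_range_ub (Cs x) MC (hMC x) b.
    exact: arC2.
  have hE := Enext_shift hp s a c (goodM (good_cst 2^-1) (goodD gV1 gV2)) (goodD gVC gR) hpt.
  move: hE; rewrite (EnextZ hp s a 2^-1 (goodD gV1 gV2)) (EnextD hp s a gV1 gV2) (EnextD hp s a gVC gR).
  rewrite /QSig eQ1 eQ2 eQC eCs' /soft_bellman /rC.
  exact: arC (ltW g0).
pose pe := fun x b => expR (QSig x b - soft_value muA QSig x).
have gpe : good2 pe := pi_good hA hS.
have hpi : forall x b, piSig x b = pe x b by move=> x b; exact: (pol_exp hA x b hS).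
have gX : good2 (fun x b => QpiS x b - (QSig x b - soft_value muA QSig x)).
  exact: goodB hQp (goodB hS (good2_fst gVS)).
have gY : good2 (fun x b => Cs x b + Ds x b) by exact: goodD hCs hDs.
have gFi : good2 (fun x b => pe x b * (QpiS x b - (QSig x b - soft_value muA QSig x))).
  exact: goodM gpe (goodB hQp (goodB hS (good2_fst gVS))).
have gGi : good2 (fun x b => pe x b * (Cs x b + Ds x b)).
  exact: goodM gpe (goodD hCs hDs).
have gF := good_Rint muA gFi.
have gG := good_Rint muA gGi.
have eQp' : forall s a, QpiS s a = rC s a + gamma * Enext muS p s a
    (fun x => Rintegral muA setT (fun b => pe x b * (QpiS x b - (QSig x b - soft_value muA QSig x)))).
  move=> s a; rewrite eQp /soft_eval; congr (_ + _ * _); congr (Enext _ _ _ _).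
  apply/funext => x; rewrite /Eact; apply: eq_Rintegral => b _.
  by rewrite hpi /pe expRK.
have eDs' : forall s a, Ds s a = gamma * Enext muS p s a
    (fun x => Rintegral muA setT (fun b => pe x b * (Cs x b + Ds x b))).
  move=> s a; rewrite eDs /D_backup; congr (_ * _); congr (Enext _ _ _ _).
  apply/funext => x; rewrite /Eact; apply: eq_Rintegral => b _.
  by rewrite hpi.
have hD : forall s a, QC s a - QpiS s a - Ds s a <= 0.
  apply: (contraction (fun s a => QC s a - QpiS s a - Ds s a) _ g01).
    exact: good2_bnd _ (goodB (goodB hC hQp) hDs).
  move=> c hc s a.
  have hpt : forall x, soft_value muA QC x <=
      Rintegral muA setT (fun b => pe x b * (QpiS x b - (QSig x b - soft_value muA QSig x)))
      + Rintegral muA setT (fun b => pe x b * (Cs x b + Ds x b)) + c.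
    move=> x.
    rewrite -RintA_D; last 2 first.
      exact: good2_sec x gFi.
      exact: good2_sec x gGi.
    have hVC : soft_value muA QC x <= soft_value muA QSig x.
      have := V_mono hA x 0 hC hS (fun b => ltac:(rewrite addr0 -subr_le0; exact: hB)).
      by rewrite addr0.
    have := Rint_pi_ge hA x (soft_value muA QSig x - c) hS
      (goodD (good2_sec x gX) (good2_sec x gY))
      (fun b => arD1 _ _ _ _ _ _ _ (hc x b) (hCC x b)).
    have -> : (fun b => expR (QSig x b - soft_value muA QSig x) *
        (QpiS x b - (QSig x b - soft_value muA QSig x) + (Cs x b + Ds x b))) =
      (fun b => pe x b * (QpiS x b - (QSig x b - soft_value muA QSig x)) + pe x b * (Cs x b + Ds x b)).
      by apply/funext => b; rewrite mulrDr.
    move=> h; rewrite -lerBlDr; apply: le_trans h; rewrite lerD2r; exact: hVC.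
  have hE := Enext_shift hp s a c gVC (goodD gF gG) hpt.
  move: hE; rewrite (EnextD hp s a gF gG).
  rewrite eQC eQp' eDs' /soft_bellman.
  exact: arD (ltW g0).
exact: (arFin _ _ _ (hD s0 a0)).
Qed.
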